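(* Let $m,N\ge1$ and $\xi=(\xi_1,\dots,\xi_m)\in\mathbb{C}^m$ with $1,\xi_1,\dots,\xi_m$ linearly independent over $\overline{\mathbb{Q}}$. Let $A\in\mathrm{GL}_m(\overline{\mathbb{Q}})$ and $\xi'=A\xi$ (viewing tuples as column vectors). Let $\varrho\ge0$. If property $\mathcal P(m,N,\xi,R)$ holds for every subspace $R\subset\mathbb{C}^\Omega$ defined over $\overline{\mathbb{Q}}$ with $\dim R=\varrho$, then $\mathcal P(m,N,\xi',R')$ holds for every subspace $R'\subset\mathbb{C}^\Omega$ defined over $\overline{\mathbb{Q}}$ with $\dim R'=\varrho$.
   Context: Let $\Omega=\{\kappa\in\mathbb{N}^m:\ N-1\le|\kappa|\le N\}$, $\Theta=\{\kappa\in\mathbb{N}^m:\ |\kappa|=N\}$ (with $|\kappa|=\kappa_1+\dots+\kappa_m$), $(E_\kappa)_{\kappa\in\Omega}$ the canonical basis of $\mathbb{C}^\Omega$, $(e_j)$ that of $\mathbb{Z}^m$. For $\zeta=(\zeta_1,\dots,\zeta_m)\in\mathbb{C}^m$ and $\kappa\in\Theta$ put $Z_\kappa^{\zeta}=E_\kappa+\sum_{j=1}^m\zeta_jE_{\kappa-e_j}$ (with $E_{\kappa-e_j}=0$ if $\kappa_j=0$) and $F_\zeta=\mathrm{Span}\{Z^\zeta_\kappa:\kappa\in\Theta\}$. For a subspace $R\subset\mathbb{C}^\Omega$, $\mathcal P(m,N,\zeta,R)$ denotes the statement: $\dim R\ge\big(2-\frac{m-1}{N+m-1}\big)\dim(F_\zeta\cap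 R)$, with equality if and only if $R=\{0\}$ or $R=\mathbb{C}^\Omega$. A subspace is defined over $\overline{\mathbb{Q}}$ if it has a basis of vectors in $\overline{\mathbb{Q}}^\Omega$. *)

(* Defs.v *)
(* The complex field is modelled as R[i] for an arbitrary
   realType R (complete archimedean ordered field, i.e. the reals). *)
From HB Require Import structures.
From mathcomp Require Import all_boot all_order all_algebra.
From mathcomp Require Import reals complex.
Set Implicit Arguments. Unset Strict Implicit. Unset Printing Implicit Defensive.
Import Order.TTheory GRing.Theory Num.Theory.
Local Open Scope ring_scope.

(* Raw multi-indices: kappa : 'I_m -> {0..N}.  Every kappa in Omega has
   entries <= |kappa| <= N, so this loses nothing. *)
Definition mindex (m N : nat) := {ffun 'I_m -> 'I_N.+1}.

Definition msize m N (k : mindex m N) : nat := (\sum_(i < m) (k i : nat))%N.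

Definition inOmega m N (k : mindex m N) : bool := (N.-1 <= msize k <= N)%N.

Definition Omega (m N : nat) := {k : mindex m N | inOmega k}.

(* C^Omega, vectors indexed (via enum_rank) by Omega *)
Definition CO (C : fieldType) (m N : nat) := 'rV[C]_(#|{: Omega m N}|).

Definition Evec (C : fieldType) m N (k : mindex m N) : CO C m N :=
  if insub k is Some o then delta_mx 0 (enum_rank o) else 0.

(* kappa - e_j  (only used when kappa_j > 0) *)
Definition mdec m N (k : mindex m N) (j : 'I_m) : mindex m N :=
  [ffun i => if i == j then inord (k i).-1 else k i].

Definition Zvec (C : fieldType) m N (zeta : 'cV[C]_m) (k : mindex m N) : CO C m N :=
  Evec C k + \sum_(j < m) (if (0 < k j)%N then zeta j 0 *: Evec C (mdec k j) else 0).

Definition inTheta m N (k : mindex m N) : bool := msize k == N.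

Definition Fspace (C : fieldType) m N (zeta : 'cV[C]_m) : {vspace CO C m N} :=
  (<<[seq Zvec zeta k | k <- enum (fun k : mindex m N => inTheta k)]>>)%VS.

Definition propP (C : fieldType) m N (zeta : 'cV[C]_m) (V : {vspace CO C m N}) : Prop :=
  let d := (\dim V)%:R : rat in
  let c := (2 - (m.-1)%:R / (N + m.-1)%:R) * (\dim (Fspace N zeta :&: V))%:R : rat in
  c <= d /\ ((d == c) = (V == 0%VS) || (V == fullv)).

Definition algebraic (C : fieldType) (x : C) : Prop :=
  exists p : {poly rat}, p != 0 /\ root (map_poly ratr p) x.

(* V is defined over Qbar: it has a basis (equivalently a spanning family)
   of vectors with algebraic coordinates *)
Definition defined_over_Qbar (C : fieldType) m N (V : {vspace CO C m N}) : Prop :=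
  exists s : seq (CO C m N),
    (forall v, v \in s -> forall i, algebraic (v 0 i)) /\ (<<s>>%VS = V).

Definition Qbar_indep1 (C : fieldType) m (xi : 'cV[C]_m) : Prop :=
  forall (c0 : C) (c : 'I_m -> C),
    algebraic c0 -> (forall j, algebraic (c j)) ->
    c0 + \sum_(j < m) c j * xi j 0 = 0 -> c0 = 0 /\ (forall j, c j = 0).
Arguments Fspace {C m} N zeta.

(* Main.v *)
Require Import Defs.
From HB Require Import structures.
From mathcomp Require Import all_boot all_order all_algebra zify.
From mathcomp Require Import reals complex.
From mathcomp.multinomials Require Import mpoly.
Set Implicit Arguments. Unset Strict Implicit. Unset Printing Implicit Defensive.
Import Order.TTheory GRing.Theory Num.Theory.
Local Open Scope ring_scope.

Section Idx.
Variables (m N : nat).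
Local Notation MI := (mindex m N).
Local Notation ksize := (@Defs.msize m N).

Definition mon (k : MI) : 'X_{1..m} := [multinom (k i : nat) | i < m].
Definition toidx (d : 'X_{1..m}) : MI := [ffun i => inord (d i)].
Definition inbox (d : 'X_{1..m}) := [forall i, (d i <= N)%N].

Lemma monE k i : mon k i = k i.
Proof. by rewrite mnmE. Qed.

Lemma mon_inj : injective mon.
Proof.
move=> k k' /mnmP H; apply/ffunP => i; apply/val_inj.
by have := H i; rewrite !monE.
Qed.

Lemma mdeg_mon k : mdeg (mon k) = ksize k.
Proof. by rewrite mdegE /Defs.msize; apply: eq_bigr => i _; rewrite monE. Qed.

Lemma toidxK k : toidx (mon k) = k.
Proof. by apply/ffunP => i; rewrite ffunE monE inord_val. Qed.

Lemma monK d : inbox d -> mon (toidx d) = d.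
Proof.
move=> /forallP H; apply/mnmP => i; rewrite monE ffunE inordK //.
by rewrite ltnS H.
Qed.

Lemma inbox_mon k : inbox (mon k).
Proof. by apply/forallP => i; rewrite monE -ltnS ltn_ord. Qed.

Lemma mnm_le_mdeg (d : 'X_{1..m}) i : (d i <= mdeg d)%N.
Proof. by rewrite mdegE (bigD1 i) //= leq_addr. Qed.

Lemma inbox_deg d : (mdeg d <= N)%N -> inbox d.
Proof. by move=> h; apply/forallP => i; apply: leq_trans h; apply: mnm_le_mdeg. Qed.

Lemma msize_toidx d : inbox d -> ksize (toidx d) = mdeg d.
Proof. by move=> h; rewrite -mdeg_mon monK. Qed.

Lemma sum_mon (C : nzRingType) (g : MI -> C) d :
  \sum_k g k * (mon k == d)%:R = if inbox d then g (toidx d) else 0.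
Proof.
case: ifP => hd.
  rewrite (bigD1 (toidx d)) //= monK // eqxx mulr1 big1 ?addr0 // => k kd.
  case: eqP => [e|]; last by rewrite mulr0.
  by move: kd; rewrite -e toidxK eqxx.
rewrite big1 // => k _; case: eqP => [e|]; last by rewrite mulr0.
by move: hd; rewrite -e inbox_mon.
Qed.

Lemma K1 (k : MI) j (d : 'X_{1..m}) :
  (0 < k j)%N && (mon (mdec k j) == d) = (mon k == (U_(j) + d)%MM).
Proof.
have [k0|kpos] := posnP (k j).
  apply/esym/negbTE/eqP => /mnmP/(_ j); rewrite monE mnmDE mnm1E eqxx k0.
  by [].
have hk : ((k j).-1 < N.+1)%N by rewrite ltnS (leq_trans (leq_pred _)) // -ltnS ltn_ord.
rewrite /=; apply/eqP/eqP => /mnmP H; apply/mnmP => i; have := H i;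
  rewrite !monE mnmDE mnm1E ffunE; case: (eqVneq i j) => [->|ne];
  rewrite ?eqxx ?(negbTE ne) ?(eq_sym j) ?(negbTE ne) //= inordK //; lia.
Qed.


End Idx.

Section Vc.
Variables (C : fieldType) (m N : nat).
Local Notation MI := (mindex m N).
Local Notation ksize := (@Defs.msize m N).
Local Notation T := (Omega m N).
Local Notation V := (CO C m N).

Definition vc (v : V) (k : MI) : C :=
  if (insub k : option T) is Some o then v 0 (enum_rank o) else 0.

Lemma vc_out v k : ~~ inOmega k -> vc v k = 0.
Proof. by move=> h; rewrite /vc insubF //; apply/negbTE. Qed.

Lemma vc_in v (o : T) : vc v (val o) = v 0 (enum_rank o).
Proof. by rewrite /vc valK. Qed.

Lemma vc_inj v w : (forall k, vc v k = vc w k) -> v = w.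
Proof.
move=> H; apply/rowP => j; have := H (val (enum_val j)).
by rewrite !vc_in enum_valK.
Qed.

Lemma vcD v w k : vc (v + w) k = vc v k + vc w k.
Proof. by rewrite /vc; case: insub => [o|]; rewrite ?mxE ?addr0. Qed.

Lemma vcZ a v k : vc (a *: v) k = a * vc v k.
Proof. by rewrite /vc; case: insub => [o|]; rewrite ?mxE ?mulr0. Qed.

Lemma vc0 k : vc 0 k = 0.
Proof. by rewrite /vc; case: insub => [o|]; rewrite ?mxE. Qed.

Lemma vc_sum (I : Type) (r : seq I) (P : pred I) (F : I -> V) k :
  vc (\sum_(i <- r | P i) F i) k = \sum_(i <- r | P i) vc (F i) k.
Proof.
elim/big_rec2: _ => [|i a b _ <-]; first exact: vc0.
by rewrite vcD.
Qed.

Lemma vc_Evec k k' : vc (Evec C k) k' = ((inOmega k) && (k == k'))%:R.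
Proof.
rewrite /Evec /vc; case: insubP => [o ho <-|ho].
  case: insubP => [o' ho' <-|ho'].
    rewrite mxE eqxx (inj_eq enum_rank_inj) (inj_eq val_inj) eq_sym.
    by have := valP o' => /= ->.
  by rewrite mxE (negbTE ho').
case: eqP => [e|]; last by rewrite andbF.
by rewrite e (negbTE ho).
Qed.

Lemma sum_vc (g : MI -> C) (v : V) :
  \sum_(i < #|{: T}|) v 0 i * g (val (enum_val i)) = \sum_k vc v k * g k.
Proof.
rewrite (bigID (fun k => inOmega k)) /= [X in _ + X]big1 ?addr0; last first.
  by move=> k hk; rewrite vc_out ?mul0r.
rewrite (@reindex_omap _ _ _ _ T val insub) => [|k hk]; last by rewrite /= insubT.
rewrite [RHS](eq_bigl xpredT) => [|[k hk]] /=; last first.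
  by rewrite hk (insubT (inOmega (N:=N)) hk) /= eqxx.
rewrite [RHS](reindex (enum_val : 'I_#|{: T}| -> T)) /=; last first.
  by exists enum_rank => x _; rewrite ?enum_valK ?enum_rankK.
by apply: eq_bigr => i _; rewrite vc_in enum_valK.
Qed.

Definition pair (v : V) (f : {mpoly C[m]}) := \sum_(k : MI) vc v k * f@_(mon k).

Lemma pairDr v f g : pair v (f + g) = pair v f + pair v g.
Proof. by rewrite /pair -big_split; apply: eq_bigr => k _; rewrite mcoeffD mulrDr. Qed.

Lemma pairZr v a f : pair v (a *: f) = a * pair v f.
Proof.
rewrite /pair mulr_sumr; apply: eq_bigr => k _.
by rewrite mcoeffZ mulrCA.
Qed.

Lemma pair0r v : pair v 0 = 0.
Proof. by rewrite /pair big1 // => k _; rewrite mcoeff0 mulr0. Qed.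

Lemma pair_sumr (I : Type) (r : seq I) (P : pred I) (F : I -> {mpoly C[m]}) v :
  pair v (\sum_(i <- r | P i) F i) = \sum_(i <- r | P i) pair v (F i).
Proof.
elim/big_rec2: _ => [|i a b _ <-]; first exact: pair0r.
by rewrite pairDr.
Qed.

Lemma pairDl v w f : pair (v + w) f = pair v f + pair w f.
Proof. by rewrite /pair -big_split; apply: eq_bigr => k _; rewrite vcD mulrDl. Qed.

Lemma pairZl a v f : pair (a *: v) f = a * pair v f.
Proof.
rewrite /pair mulr_sumr; apply: eq_bigr => k _.
by rewrite vcZ mulrA.
Qed.

Lemma pair0l f : pair 0 f = 0.
Proof. by rewrite /pair big1 // => k _; rewrite vc0 mul0r. Qed.

Lemma pair_suml (I : Type) (r : seq I) (P : pred I) (F : I -> V) f :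
  pair (\sum_(i <- r | P i) F i) f = \sum_(i <- r | P i) pair (F i) f.
Proof.
elim/big_rec2: _ => [|i a b _ <-]; first exact: pair0l.
by rewrite pairDl.
Qed.

Lemma pair_X v d : pair v 'X_[d] = if inbox N d then vc v (toidx N d) else 0.
Proof.
rewrite /pair -sum_mon; apply: eq_bigr => k _.
by rewrite mcoeffX eq_sym.
Qed.

Lemma pair_Xmon v k : pair v 'X_[mon k] = vc v k.
Proof. by rewrite pair_X inbox_mon toidxK. Qed.

End Vc.

Section Fsp.
Variables (C : fieldType) (m N : nat).
Hypothesis hN : (0 < N)%N.
Local Notation MI := (mindex m N).
Local Notation ksize := (@Defs.msize m N).
Local Notation T := (Omega m N).
Local Notation V := (CO C m N).
Implicit Types (z : 'cV[C]_m) (v : V).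

Definition lin (z : 'cV[C]_m) : {mpoly C[m]} := \sum_(j < m) z j 0 *: 'X_j.

Definition Cond (z : 'cV[C]_m) (v : V) :=
  forall d : 'X_{1..m}, mdeg d = N.-1 -> pair v 'X_[d] = pair v (lin z * 'X_[d]).

Lemma lin_mulX z d : lin z * 'X_[d] = \sum_j z j 0 *: 'X_[(U_(j) + d)%MM].
Proof.
rewrite /lin mulr_suml; apply: eq_bigr => j _.
by rewrite -scalerAl mpolyXD.
Qed.

Lemma pair_linX (v : V) z d :
  pair v (lin z * 'X_[d]) = \sum_j z j 0 * pair v 'X_[(U_(j) + d)%MM].
Proof.
rewrite lin_mulX pair_sumr; apply: eq_bigr => j _; by rewrite pairZr.
Qed.

Lemma theta_omega (k : MI) : inTheta k -> inOmega k.
Proof. by rewrite /inTheta /inOmega => /eqP ->; rewrite leq_pred leqnn. Qed.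

Lemma mon_mdec (k : MI) j : (0 < k j)%N -> mon k = (U_(j) + mon (mdec k j))%MM.
Proof. by move=> hj; have := K1 k j (mon (mdec k j)); rewrite hj eqxx => /esym/eqP. Qed.

Lemma ksize_mdec (k : MI) j : (0 < k j)%N -> ksize k = (ksize (mdec k j)).+1.
Proof. by move=> hj; rewrite -!mdeg_mon (mon_mdec hj) mdegD mdeg1. Qed.

Lemma neq_deg (a b : 'X_{1..m}) : mdeg a != mdeg b -> (a == b) = false.
Proof. by apply: contraNF => /eqP ->. Qed.

Lemma vc_Zvec z (k : MI) k' : inTheta k ->
  vc (Zvec z k) k' = (k == k')%:R + \sum_j z j 0 * (mon k == (U_(j) + mon k')%MM)%:R.
Proof.
move=> hk; rewrite /Zvec vcD vc_Evec theta_omega //= vc_sum; congr (_ + _).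
apply: eq_bigr => j _; rewrite -K1; case: ifP => hj /=; last by rewrite vc0 mulr0.
rewrite vcZ vc_Evec (inj_eq (@mon_inj m N)).
have hs := ksize_mdec hj; move/eqP: hk => hk.
have -> : inOmega (mdec k j) by rewrite /inOmega; apply/andP; split; lia.
by [].
Qed.

Lemma Z_cond z k : inTheta k -> Cond z (Zvec z k).
Proof.
move=> hk d hd; have dN : (mdeg d <= N)%N by rewrite hd leq_pred.
have hk' : mdeg (mon k) = N by rewrite mdeg_mon; apply/eqP.
rewrite pair_linX pair_X inbox_deg // vc_Zvec //.
rewrite -(inj_eq (@mon_inj m N)) monK ?inbox_deg // neq_deg ?hk' ?hd; last first.
  by apply/eqP; lia.
rewrite add0r; apply: eq_bigr => j _.
have hj : mdeg (U_(j) + d)%MM = N by rewrite mdegD mdeg1 hd; lia.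
rewrite pair_X inbox_deg ?hj // vc_Zvec // big1 ?addr0; last first.
  move=> j' _; rewrite monK ?inbox_deg ?hj //.
  by rewrite neq_deg ?mulr0 // hk' !mdegD !mdeg1 hd; apply/eqP; lia.
by rewrite -(inj_eq (@mon_inj m N)) monK // inbox_deg ?hj.

Qed.

Lemma F_cond z (v : V) : v \in Fspace N z -> Cond z v.
Proof.
rewrite /Fspace; set s := [seq _ | _ <- _] => hv.
have := coord_span (X := in_tuple s) hv => ->.
move=> d hd; rewrite !pair_suml; apply: eq_bigr => i _; rewrite !pairZl.
congr (_ * _).
have : (in_tuple s)`_i \in s by apply: mem_nth; exact: ltn_ord.
case/mapP => k; rewrite mem_enum => hk ->; exact: Z_cond.
Qed.

Lemma cond_homog z (v : V) h : Cond z v -> h \is (N.-1).-homog ->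
  pair v h = pair v (lin z * h).
Proof.
move=> hc hh; rewrite [h]mpolyE mulr_sumr !pair_sumr.
apply: eq_big_seq => d hd; rewrite -scalerAr !pairZr hc //.
exact: (dhomog_mf hh hd).
Qed.

Lemma cond_F z (v : V) : Cond z v -> v \in Fspace N z.
Proof.
move=> hc.
have -> : v = \sum_(k | inTheta k) vc v k *: Zvec z k.
  apply: vc_inj => k; case hk: (inOmega k); last by rewrite !vc_out ?hk.
  rewrite vc_sum (eq_bigr (fun k' => vc v k' * ((k' == k)%:R +
     \sum_j z j 0 * (mon k' == (U_(j) + mon k)%MM)%:R))); last first.
    by move=> k' hk'; rewrite vcZ vc_Zvec.
  have : ksize k = N \/ ksize k = N.-1.
    by move: hk; rewrite /inOmega => /andP [a b]; lia.
  case => hs.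
  - rewrite (bigD1 k) /=; last by rewrite /inTheta hs.
    have h1 : \sum_(j < m) z j 0 * (mon k == (U_(j) + mon k)%MM)%:R = 0.
      by rewrite big1 // => j _; rewrite neq_deg ?mulr0 // mdegD mdeg1; apply/eqP; lia.
    rewrite h1 eqxx addr0 mulr1 big1 ?addr0 // => k' /andP [hk' nk].
    rewrite (negbTE nk) add0r big1 ?mulr0 // => j _.
    move: hk'; rewrite /inTheta => /eqP hk'.
    by rewrite neq_deg ?mulr0 // mdegD mdeg1 !mdeg_mon hs hk'; apply/eqP; lia.
  - have hd : mdeg (mon k) = N.-1 by rewrite mdeg_mon.
    rewrite -pair_Xmon hc // pair_linX.
    rewrite (eq_bigr (fun k' => \sum_j z j 0 * (vc v k' *
        (mon k' == (U_(j) + mon k)%MM)%:R))); last first.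
      move=> k' hk'; move: hk'; rewrite /inTheta => /eqP hk'.
      have -> : (k' == k) = false.
        by apply/negbTE/eqP => e; move: hk'; rewrite e hs; lia.
      by rewrite add0r mulr_sumr; apply: eq_bigr => j _; rewrite mulrCA.
    rewrite exchange_big /=; apply: eq_bigr => j _; rewrite -mulr_sumr.
    congr (_ * _).
    have he : mdeg (U_(j) + mon k)%MM = N by rewrite mdegD mdeg1 hd; lia.
    rewrite pair_X inbox_deg ?he // big_mkcond /=.
    rewrite (eq_bigr (fun k' => (if inTheta k' then vc v k' else 0) *
       (mon k' == (U_(j) + mon k)%MM)%:R)); last first.
      by move=> k' _; case: ifP; rewrite ?mul0r.
    rewrite sum_mon inbox_deg ?he // /inTheta msize_toidx ?inbox_deg ?he //.
    by rewrite eqxx.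
apply: memv_suml => k hk; apply: memvZ; apply: memv_span.
by apply/mapP; exists k; rewrite ?mem_enum.
Qed.

End Fsp.

Section Sig.
Variables (C : fieldType) (m : nat).
Implicit Types (z : 'cV[C]_m) (B : 'M[C]_m) (p : {mpoly C[m]}).

Definition sig B p : {mpoly C[m]} := p \mPo [tuple lin (col i B) | i < m].

Lemma sigD B p q : sig B (p + q) = sig B p + sig B q.
Proof. exact: comp_mpolyD. Qed.

Lemma sigZ B a p : sig B (a *: p) = a *: sig B p.
Proof. exact: comp_mpolyZ. Qed.

Lemma sig_sum B (I : Type) (r : seq I) (P : pred I) (F : I -> {mpoly C[m]}) :
  sig B (\sum_(i <- r | P i) F i) = \sum_(i <- r | P i) sig B (F i).
Proof. by rewrite /sig raddf_sum. Qed.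

Lemma sigM B p q : sig B (p * q) = sig B p * sig B q.
Proof. by rewrite /sig rmorphM. Qed.

Lemma sigXU B i : sig B 'X_i = lin (col i B).
Proof. by rewrite /sig comp_mpolyXU -tnth_nth tnth_mktuple. Qed.

Lemma sigX B d : sig B 'X_[d] = \prod_(i < m) (lin (col i B)) ^+ (d i).
Proof. by rewrite /sig comp_mpolyX; apply: eq_bigr => i _; rewrite tnth_mktuple. Qed.

Lemma sig_lin B z : sig B (lin z) = lin (B *m z).
Proof.
rewrite /lin sig_sum.
rewrite (eq_bigr (fun i => \sum_j (z i 0 * B j i) *: 'X_j)); last first.
  move=> i _; rewrite sigZ sigXU /lin scaler_sumr; apply: eq_bigr => j _.
  by rewrite mxE scalerA.
rewrite exchange_big /=; apply: eq_bigr => j _; rewrite mxE -scaler_suml.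
by congr (_ *: _); apply: eq_bigr => i _; rewrite mulrC.
Qed.

Lemma sig_comp B B' p : sig B (sig B' p) = sig (B *m B') p.
Proof.
rewrite (mpolyE p) (sig_sum B') (sig_sum B) (sig_sum (B *m B')).
apply: eq_bigr => d _; rewrite !sigZ; congr (_ *: _).
rewrite !sigX /sig rmorph_prod; apply: eq_bigr => i _; rewrite rmorphXn /=.
by rewrite -/(sig B _) sig_lin !colE mulmxA.
Qed.

Lemma sig1 p : sig 1%:M p = p.
Proof.
rewrite /sig -[RHS]comp_mpoly_id; congr (_ \mPo _).
apply: eq_from_tnth => i; rewrite !tnth_mktuple /lin (bigD1 i) //= big1.
  by rewrite addr0 mxE mxE eqxx scale1r.
by move=> j ji; rewrite !mxE (negbTE ji) scale0r.
Qed.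

Lemma lin_homog z : lin z \is 1.-homog.
Proof.
apply: rpred_sum => j _; apply: rpredZ.
by rewrite dhomogX; apply/eqP; exact: mdeg1.
Qed.

Lemma sig_homog B d : sig B 'X_[d] \is (mdeg d).-homog.
Proof.
rewrite sigX mdegE; elim/big_rec2: _ => [|i n p _ hp]; first exact: dhomog1.
have := dhomogMn (d i) (lin_homog (col i B)); rewrite mul1n => h.
exact: dhomogM h hp.
Qed.

End Sig.

Section Phi.
Variables (C : fieldType) (m N : nat).
Hypothesis hN : (0 < N)%N.
Local Notation MI := (mindex m N).
Local Notation ksize := (@Defs.msize m N).
Local Notation T := (Omega m N).
Local Notation V := (CO C m N).
Implicit Types (z : 'cV[C]_m) (v : V) (B : 'M[C]_m).

Definition Mx B : 'M[C]_#|{: T}| :=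
  \matrix_(i, j) (sig B 'X_[mon (val (enum_val j))])@_(mon (val (enum_val i))).

Lemma vc_mul v B (k : MI) :
  vc (v *m Mx B) k = if inOmega k then pair v (sig B 'X_[mon k]) else 0.
Proof.
case: ifP => hk; last by rewrite vc_out ?hk.
pose o : T := Sub k hk; have ko : k = val o by rewrite SubK.
rewrite {1}ko vc_in mxE /pair -sum_vc; apply: eq_bigr => i _.
by rewrite mxE enum_rankK -ko.
Qed.

Lemma P1 v B f d0 : f \is d0.-homog -> (d0 = N.-1 \/ d0 = N) ->
  pair (v *m Mx B) f = pair v (sig B f).
Proof.
move=> hf hd0.
have ef : f = \sum_(k : MI) (if inOmega k then f@_(mon k) else 0) *: 'X_[mon k].
  apply/mpolyP => d; rewrite raddf_sum /=.
  rewrite (eq_bigr (fun k : MI => (if inOmega k then f@_(mon k) else 0) *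
     (mon k == d)%:R)); last by move=> k _; rewrite mcoeffZ mcoeffX.
  rewrite sum_mon; case: (boolP (d \in msupp f)) => hd.
    have dd : mdeg d = d0 by exact: (dhomog_mf hf hd).
    have db : inbox N d by apply: inbox_deg; case: hd0; lia.
    rewrite db /inOmega msize_toidx // monK // ifT //; case: hd0; lia.
  rewrite (memN_msupp_eq0 hd); case: ifP => // db; case: ifP => //.
  by rewrite monK // (memN_msupp_eq0 hd).
rewrite {2}ef sig_sum pair_sumr {1}/pair; apply: eq_bigr => k _.
rewrite vc_mul sigZ pairZr; case: ifP => _; last by rewrite !mul0r.
by rewrite mulrC.
Qed.

Lemma L1 v B z : v \in Fspace N (B *m z) -> v *m Mx B \in Fspace N z.
Proof.
move=> hv; apply: cond_F => // d hd.
rewrite (@P1 _ _ _ (N.-1)); last by left.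
  rewrite (@P1 _ _ _ N); last by right.
    rewrite sigM sig_lin; apply: cond_homog; first exact: F_cond.
    by rewrite -hd; exact: sig_homog.
  have hX : ('X_[d] : {mpoly C[m]}) \is (mdeg d).-homog by rewrite dhomogX.
  by have := dhomogM (lin_homog z) hX; rewrite hd add1n prednK.
by rewrite -hd dhomogX.
Qed.

Lemma Mx_inv v B B' : B *m B' = 1%:M -> (v *m Mx B) *m Mx B' = v.
Proof.
move=> hB; apply: vc_inj => k; rewrite vc_mul; case: ifP => hk; last by rewrite vc_out ?hk.
rewrite (@P1 _ _ _ (ksize k)); first by rewrite sig_comp hB sig1 pair_Xmon.
  by rewrite -mdeg_mon; exact: sig_homog.
by move: hk; rewrite /inOmega => /andP [a b]; lia.
Qed.

Lemma Mx_invR v B : B \in unitmx -> (v *m Mx B) *m Mx (invmx B) = v.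
Proof. by move=> hB; apply: Mx_inv; rewrite mulmxV. Qed.

Lemma Mx_invL v B : B \in unitmx -> (v *m Mx (invmx B)) *m Mx B = v.
Proof. by move=> hB; apply: Mx_inv; rewrite mulVmx. Qed.

Lemma L1inv v B z : B \in unitmx -> v \in Fspace N z -> v *m Mx (invmx B) \in Fspace N (B *m z).
Proof. by move=> hB hv; apply: L1; rewrite mulmxA mulVmx // mul1mx. Qed.

End Phi.

Section Alg.
Variables (R : realType).
Local Notation C := (R[i]).

Definition QtoC : {rmorphism rat -> C} := ratr.

Lemma alg_int (x : C) : algebraic x -> integralOver QtoC x.
Proof. by case=> p [p0 hp]; apply/integral_algebraic; exists p. Qed.

Lemma int_alg (x : C) : integralOver QtoC x -> algebraic x.
Proof. by move/integral_algebraic => [p p0 hp]; exists p. Qed.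

Lemma alg_add (x y : C) : algebraic x -> algebraic y -> algebraic (x + y).
Proof. by move=> /alg_int hx /alg_int hy; apply: int_alg; apply: integral_add. Qed.

Lemma alg_mul (x y : C) : algebraic x -> algebraic y -> algebraic (x * y).
Proof. by move=> /alg_int hx /alg_int hy; apply: int_alg; apply: integral_mul. Qed.

Lemma alg_nat n : algebraic (n%:R : C).
Proof. by apply: int_alg; apply: integral_nat. Qed.

Lemma alg0 : algebraic (0 : C). Proof. exact: (alg_nat 0). Qed.
Lemma alg1 : algebraic (1 : C). Proof. exact: (alg_nat 1). Qed.

Lemma alg_sum (I : Type) (r : seq I) (P : pred I) (F : I -> C) :
  (forall i, P i -> algebraic (F i)) -> algebraic (\sum_(i <- r | P i) F i).
Proof. by move=> h; elim/big_ind: _ => //; [exact: alg0 | exact: alg_add]. Qed.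

Variable m : nat.
Definition palg (p : {mpoly C[m]}) := forall d, algebraic p@_d.

Lemma palgX d : palg 'X_[d].
Proof. by move=> d'; rewrite mcoeffX; exact: alg_nat. Qed.

Lemma palg1 : palg 1.
Proof. by rewrite -mpolyX0; exact: palgX. Qed.

Lemma palg0 : palg 0.
Proof. by move=> d; rewrite mcoeff0; exact: alg0. Qed.

Lemma palgD p q : palg p -> palg q -> palg (p + q).
Proof. by move=> hp hq d; rewrite mcoeffD; apply: alg_add. Qed.

Lemma palgZ a p : algebraic a -> palg p -> palg (a *: p).
Proof. by move=> ha hp d; rewrite mcoeffZ; apply: alg_mul. Qed.

Lemma palgM p q : palg p -> palg q -> palg (p * q).
Proof.
by move=> hp hq d; rewrite mcoeffM; apply: alg_sum => k _; apply: alg_mul.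
Qed.

Lemma palg_sum (I : Type) (r : seq I) (P : pred I) (F : I -> {mpoly C[m]}) :
  (forall i, P i -> palg (F i)) -> palg (\sum_(i <- r | P i) F i).
Proof. by move=> h; elim/big_ind: _ => //; [exact: palg0 | exact: palgD]. Qed.

Lemma palg_prod (I : Type) (r : seq I) (P : pred I) (F : I -> {mpoly C[m]}) :
  (forall i, P i -> palg (F i)) -> palg (\prod_(i <- r | P i) F i).
Proof. by move=> h; elim/big_ind: _ => //; [exact: palg1 | exact: palgM]. Qed.

Lemma palgXn p n : palg p -> palg (p ^+ n).
Proof.
move=> hp; elim: n => [|n ih]; first by rewrite expr0; exact: palg1.
by rewrite exprS; apply: palgM.
Qed.

Lemma palg_sig (A : 'M[C]_m) d : (forall i j, algebraic (A i j)) -> palg (sig A 'X_[d]).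
Proof.
move=> hA; rewrite sigX; apply: palg_prod => i _; apply: palgXn.
rewrite /lin; apply: palg_sum => j _; apply: palgZ; first by rewrite mxE.
exact: palgX.
Qed.

End Alg.

Lemma eq_fullv (K : fieldType) (vT : vectType K) (U : {vspace vT}) :
  (U == fullv) = (\dim U == \dim (fullv : {vspace vT})).
Proof.
apply/eqP/eqP => [->//|h]; apply/eqP; rewrite eqEdim subvf h leqnn //.
Qed.

Theorem lemma5 (R : realType) (m N : nat) (xi : 'cV[R[i]]_m)
    (A : 'M[R[i]]_m) (rho : nat) :
  (0 < m)%N -> (0 < N)%N ->
  Qbar_indep1 xi ->
  (forall i j, algebraic (A i j)) -> A \in unitmx ->
  (forall V : {vspace CO R[i] m N},
      defined_over_Qbar V -> \dim V = rho -> propP xi V) ->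
  forall V' : {vspace CO R[i] m N},
    defined_over_Qbar V' -> \dim V' = rho -> propP (A *m xi) V'.
Proof.
move=> hm hN _ hA hU hP V' hV' hdim.
have [Phi PhiE] : {Phi : 'End(CO R[i] m N) | forall v, Phi v = v *m Mx N A}.
  by exists (linfun (mulmxr (Mx N A))) => v; rewrite lfunE.
have [Psi PsiE] : {Psi : 'End(CO R[i] m N) | forall v, Psi v = v *m Mx N (invmx A)}.
  by exists (linfun (mulmxr (Mx N (invmx A)))) => v; rewrite lfunE.
have PsiPhi v : Psi (Phi v) = v by rewrite PsiE PhiE; apply: (Mx_invR hN); exact hU.
have PhiPsi v : Phi (Psi v) = v by rewrite PhiE PsiE; apply: (Mx_invL hN); exact hU.
have kPhi : lker Phi == 0%VS by apply/lker0P; exact: can_inj PsiPhi.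
have kPsi : lker Psi == 0%VS by apply/lker0P; exact: can_inj PhiPsi.
have dimPhi U : \dim (Phi @: U) = \dim U by apply: limg_dim_eq; rewrite (eqP kPhi) capv0.
have dimPsi U : \dim (Psi @: U) = \dim U by apply: limg_dim_eq; rewrite (eqP kPsi) capv0.
pose V := (Phi @: V')%VS.
have dimV : \dim V = \dim V' by exact: dimPhi.
have PsiV : (Psi @: V)%VS = V'.
  rewrite -limg_comp (_ : (Psi \o Phi)%VF = \1%VF) ?lim1g //.
  by apply/lfunP => v; rewrite comp_lfunE id_lfunE PsiPhi.
have s1 : (Phi @: Fspace N (A *m xi) <= Fspace N xi)%VS.
  apply/subvP => w /memv_imgP [u hu ->]; rewrite PhiE; exact: L1.
have s2 : (Psi @: Fspace N xi <= Fspace N (A *m xi))%VS.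
  by apply/subvP => w /memv_imgP [u hu ->]; rewrite PsiE; apply: L1inv; [exact hN | exact hU | exact hu].
have hF : \dim (Fspace N xi :&: V) = \dim (Fspace N (A *m xi) :&: V').
  apply/eqP; rewrite eqn_leq; apply/andP; split.
    rewrite -dimPsi lker0_img_cap // PsiV; apply: dimvS; exact: capvS.
  by rewrite -dimPhi lker0_img_cap //; apply: dimvS; exact: capvS.
have hV : defined_over_Qbar V.
  case: hV' => s [hs hsV]; exists (map Phi s); split; last by rewrite /V -hsV limg_span.
  move=> w /mapP [u hu ->] j; rewrite PhiE mxE; apply: alg_sum => i _.
  apply: alg_mul; first exact: hs.
  by rewrite mxE; apply: palg_sig.
have := hP V hV (etrans dimV hdim); rewrite /propP dimV hF.
by rewrite -!dimv_eq0 !eq_fullv dimV.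
Qed.
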